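(* For a (finite simple) graph $G$, the following are equivalent: (1) $G$ is threshold; (2) the clique hypergraph ${\cal C}(G)$ is $1$-Sperner; (3) ${\cal C}(G)$ is threshold; (4) ${\cal C}(G)$ is $2$-asummable.
   Context: A hypergraph ${\cal H}=(V,{\cal E})$ consists of a finite vertex set $V$ and a set ${\cal E}$ of subsets of $V$. A set $X\subseteq V$ is dependent if it contains some hyperedge, and independent otherwise. ${\cal H}$ is threshold if there exist $w:V\to\mathbb{Z}_{\ge0}$ and $t\in\mathbb{Z}_{\ge0}$ such that for every $X\subseteq V$, $\sum_{x\in X}w(x)\ge t$ iff $X$ is dependent. A graph is threshold if, viewed as the hypergraph $(V(G),E(G))$ whose hyperedges are its edges, it is threshold. ${\cal H}$ is $1$-Sperner if every two distinct hyperedges $e,f$ satisfy $\min\{|e\setminus f|,|f\setminus e|\}=1$. ${\cal H}$ is $2$-asummable if there are no independent sets $A_1,A_2$ and dependent sets $B_1,B_2$ (not necessarily distinct) with $\chi^{A_1}+\chi^{A_2}=\chi^{B_1}+\chi^{B_2}$, where $\chi^S\in\{0,1\}^V$ is the characteristic vector of $S$. The clique hypergraph ${\cal C}(G)$ has vertex set $V(G)$ and hyperedges the maximal cliques of $G$. *)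

(* Defs.v *)
From mathcomp Require Import all_boot.
Set Implicit Arguments. Unset Strict Implicit. Unset Printing Implicit Defensive.

(* A hypergraph with vertex set the finType T is given by its set of hyperedges
   E : {set {set T}}. *)
Section Hyper.
Variable T : finType.
Implicit Types (E : {set {set T}}) (X : {set T}).

Definition dependent E X : bool := [exists f in E, f \subset X].
Definition independent E X : bool := ~~ dependent E X.

Definition threshold_hyp E : Prop :=
  exists (w : T -> nat) (t : nat),
    forall X : {set T}, (t <= \sum_(x in X) w x) = dependent E X.

Definition one_Sperner E : Prop :=
  forall f g, f \in E -> g \in E -> f != g -> minn #|f :\: g| #|g :\: f| = 1.

Definition chi X (x : T) : nat := (x \in X).

Definition two_asummable E : Prop :=
  ~ exists A1 A2 B1 B2 : {set T},
      [/\ independent E A1, independent E A2, dependent E B1, dependent E B2 &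
          forall x, chi A1 x + chi A2 x = chi B1 x + chi B2 x].

Definition simple_graph (e : rel T) : Prop := symmetric e /\ irreflexive e.

Definition edge_hyp (e : rel T) : {set {set T}} :=
  [set S : {set T} | [exists x, exists y, e x y && (S == [set x; y])]].

Definition threshold_graph (e : rel T) : Prop := threshold_hyp (edge_hyp e).

Definition is_clique (e : rel T) X : bool :=
  [forall x in X, forall y in X, (x != y) ==> e x y].

Definition clique_hyp (e : rel T) : {set {set T}} :=
  [set K : {set T} | maxset (fun S : {set T} => is_clique e S) K].
End Hyper.

(* Main.v *)
Require Import Defs.
From mathcomp Require Import all_boot zify.
Set Implicit Arguments. Unset Strict Implicit. Unset Printing Implicit Defensive.

Section Main.
Variable T : finType.
Variable e : rel T.
Hypothesis esym : symmetric e.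
Hypothesis eirr : irreflexive e.

Lemma cliqP (S : {set T}) :
  reflect (forall x y, x \in S -> y \in S -> x != y -> e x y) (is_clique e S).
Proof.
apply: (iffP forallP) => [H x y xS yS xy | H x].
  by move: (H x); rewrite xS /= => /forallP/(_ y); rewrite yS xy.
apply/implyP => xS; apply/forallP => y; apply/implyP => yS; apply/implyP; exact: H.
Qed.

Definition mcU (U K : {set T}) : Prop :=
  [/\ K \subset U, is_clique e K &
      forall K' : {set T}, K' \subset U -> is_clique e K' -> K \subset K' -> K' = K].
Definition depU (U X : {set T}) : Prop := exists K, mcU U K /\ K \subset X.

Lemma mcT K : K \in clique_hyp e <-> mcU setT K.
Proof.
rewrite inE; split.
  move/maxsetP=> [cK H]; split; [exact: subsetT | done | move=> K' _; exact: H].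
move=> [_ cK H]; apply/maxsetP; split => // K' cK'; exact: H (subsetT _) cK'.
Qed.

Lemma depT X : dependent (clique_hyp e) X <-> depU setT X.
Proof.
split.
  by move/existsP=> [K /andP[/mcT mK KX]]; exists K.
move=> [K [mK KX]]; apply/existsP; exists K; apply/andP; split => //; exact/mcT.
Qed.

Definition alt4free := forall a b c d,
  e a b -> e c d -> a != c -> b != d -> e a c || e b d.

Definition hasE (X : {set T}) : bool := [exists x in X, exists y in X, e x y].

Lemma depE X : dependent (edge_hyp e) X = hasE X.
Proof.
apply/existsP/existsP.
  move=> [f /andP[fE fX]]; rewrite inE in fE.
  case/existsP: fE => x /existsP[y /andP[exy /eqP fxy]].
  rewrite fxy in fX; exists x; apply/andP; split.
    by apply: (subsetP fX); rewrite !inE eqxx.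
  apply/existsP; exists y; rewrite exy andbT.
  by apply: (subsetP fX); rewrite !inE eqxx orbT.
move=> [x /andP[xX /existsP[y /andP[yX exy]]]].
exists [set x; y]; apply/andP; split.
  rewrite inE; apply/existsP; exists x; apply/existsP; exists y; by rewrite exy eqxx.
by apply/subsetP => z; rewrite !inE => /orP[]/eqP->.
Qed.

Lemma thr_asum (E : {set {set T}}) : threshold_hyp E -> two_asummable E.
Proof.
move=> [w [t H]] [A1 [A2 [B1 [B2 [iA1 iA2 dB1 dB2 hs]]]]].
have sumchi : forall X : {set T}, \sum_(x in X) w x = \sum_x chi X x * w x.
  move=> X; rewrite big_mkcond /=; apply: eq_bigr => x _; rewrite /chi.
  by case: (x \in X); rewrite ?mul1n ?mul0n.
have : \sum_(x in A1) w x + \sum_(x in A2) w x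
       = \sum_(x in B1) w x + \sum_(x in B2) w x.
  rewrite !sumchi -!big_split /=; apply: eq_bigr => x _; by rewrite -!mulnDl hs.
move: (H A1) (H A2) (H B1) (H B2).
rewrite dB1 dB2 (negbTE iA1) (negbTE iA2).
lia.
Qed.

Lemma neq_of_e x y : e x y -> x != y.
Proof. by apply: contraTneq => ->; rewrite eirr. Qed.

Lemma sum2 (w : T -> nat) x y : x != y -> \sum_(z in [set x; y]) w z = w x + w y.
Proof. by move=> xy; rewrite big_setU1 ?big_set1 // inE. Qed.

Lemma hasE2 x y : hasE [set x; y] = e x y.
Proof.
apply/existsP/idP.
  move=> [u /andP[uin /existsP[v /andP[vin euv]]]].
  move: uin vin euv; rewrite !inE => /orP[]/eqP-> /orP[]/eqP->;
    by rewrite ?eirr // esym.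
move=> exy; exists x; rewrite !inE eqxx /=; apply/existsP; exists y.
by rewrite !inE eqxx orbT.
Qed.

Lemma T_P : threshold_graph e -> alt4free.
Proof.
move=> [w [t H]] a b c d eab ecd ac bd; apply/negPn/negP; rewrite negb_or.
move=> /andP[nac nbd].
move: (H [set a; b]) (H [set c; d]) (H [set a; c]) (H [set b; d]).
rewrite !depE !hasE2.
rewrite (sum2 _ (neq_of_e eab)) (sum2 _ (neq_of_e ecd)) (sum2 _ ac) (sum2 _ bd).
rewrite eab ecd (negbTE nac) (negbTE nbd).
lia.
Qed.

Lemma clique2 x y : e x y -> is_clique e [set x; y].
Proof.
move=> exy; apply/cliqP => u v; rewrite !inE => /orP[]/eqP-> /orP[]/eqP->;
  by rewrite ?eqxx // esym.
Qed.

Lemma ext_mc (C : {set T}) : is_clique e C -> exists K, mcU setT K /\ C \subset K.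
Proof.
move=> cC; have [K mK CK] := maxset_exists (P := fun S : {set T} => is_clique e S) cC.
exists K; split => //; apply/mcT; by rewrite inE.
Qed.

Lemma notin_mc U g a c : mcU U g -> c \in g -> a != c -> ~~ e a c -> a \notin g.
Proof.
move=> [_ cg _] cin ac nac; apply/negP => ain; move/negP: nac; apply.
exact: (cliqP _ cg).
Qed.

Lemma alt_setup a b c d : e a b -> e c d -> a != c -> b != d -> ~~ e a c -> ~~ e b d ->
  exists f g, [/\ mcU setT f, mcU setT g, [/\ a \in f, b \in f, a \notin g & b \notin g]
     & [/\ c \in g, d \in g, c \notin f & d \notin f]].
Proof.
move=> eab ecd ac bd nac nbd.
have [f [mf abf]] := ext_mc (clique2 eab).
have [g [mg cdg]] := ext_mc (clique2 ecd).
have af : a \in f by apply: (subsetP abf); rewrite !inE eqxx.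
have bf : b \in f by apply: (subsetP abf); rewrite !inE eqxx orbT.
have cg : c \in g by apply: (subsetP cdg); rewrite !inE eqxx.
have dg : d \in g by apply: (subsetP cdg); rewrite !inE eqxx orbT.
exists f, g; split => //; split => //.
- exact: (notin_mc mg cg).
- exact: (notin_mc mg dg).
- by apply: (notin_mc mf af); rewrite 1?eq_sym // esym.
- by apply: (notin_mc mf bf); rewrite 1?eq_sym // esym.
Qed.

Lemma S_P : one_Sperner (clique_hyp e) -> alt4free.
Proof.
move=> HS a b c d eab ecd ac bd; apply/negPn/negP; rewrite negb_or.
move=> /andP[nac nbd].
have [f [g [mf mg [af bf ag bg] [cg dg cf df]]]] := alt_setup eab ecd ac bd nac nbd.
have fg : f != g by apply: contraNneq ag => <-.
have := HS f g (proj2 (mcT f) mf) (proj2 (mcT g) mg) fg.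
have h1 : #|[set a; b]| <= #|f :\: g|.
  by apply: subset_leq_card; apply/subsetP => z; rewrite !inE => /orP[]/eqP->;
     rewrite ?ag ?af ?bg ?bf.
have h2 : #|[set c; d]| <= #|g :\: f|.
  by apply: subset_leq_card; apply/subsetP => z; rewrite !inE => /orP[]/eqP->;
     rewrite ?cg ?dg ?cf ?df.
move: h1 h2; rewrite !cards2 (neq_of_e eab) (neq_of_e ecd) /=.
move=> h1' h2'; rewrite /minn; case: ltnP => _ h; rewrite h in h1' h2'; by [].
Qed.

Lemma indep_swap (f g : {set T}) x y :
  mcU setT f -> mcU setT g -> x \in f -> x \notin g -> y \in g -> y \notin f ->
  (e x y \/ ((forall x' y', x' \in f -> x' \notin g -> y' \in g -> y' \notin f -> ~~ e x' y')
              /\ exists2 y', y' \in g & (y' \notin f) && (y' != y))) ->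
  ~ depU setT (y |: (f :\ x)).
Proof.
move=> [_ cf mxf] [_ cg mxg] xf xg yg yf H [K [[_ cK mxK] KA]].
have xy : x != y by apply: contraNneq yf => <-.
have xA : x \notin y |: (f :\ x) by rewrite !inE eqxx (negbTE xy).
case: H => [exy | [nc [y' y'g /andP[y'f y'y]]]].
  have cxK : is_clique e (x |: K).
    apply/cliqP => u v; rewrite !inE => /orP[/eqP->|uK] /orP[/eqP->|vK];
      rewrite ?eqxx // => uv.
    - move: (subsetP KA v vK); rewrite !inE => /orP[/eqP->//|/andP[vx vf]].
      by apply: (cliqP _ cf); rewrite // eq_sym.
    - move: (subsetP KA u uK); rewrite !inE => /orP[/eqP->|/andP[ux uf]].
        by rewrite esym.
      exact: (cliqP _ cf).
    - exact: (cliqP _ cK).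
  have := mxK (x |: K) (subsetT _) cxK (subsetUr _ _).
  move=> eqK; move: xA; rewrite -eqK in KA; move: (subsetP KA x); rewrite !inE eqxx.
  by move=> /(_ isT) ->.
case/boolP: (K \subset f) => Kf.
  have fK := mxK f (subsetT _) cf Kf.
  by move: (subsetP KA x); rewrite -fK xf => /(_ isT); apply/negP.
case/boolP: (K \subset g) => Kg.
  have gK := mxK g (subsetT _) cg Kg.
  move: (subsetP KA y'); rewrite -gK y'g => /(_ isT); rewrite !inE.
  by rewrite (negbTE y'y) (negbTE y'f) andbF.
have /subsetPn[k1 k1K k1f] := Kf.
have /subsetPn[k2 k2K k2g] := Kg.
have k1y : k1 = y.
  by move: (subsetP KA k1 k1K); rewrite !inE (negbTE k1f) andbF orbF => /eqP.
have k2f : k2 \in f.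
  move: (subsetP KA k2 k2K); rewrite !inE => /orP[/eqP k2y|/andP[]//].
  by move: k2g; rewrite k2y yg.
have k12 : k2 != k1 by apply: contraNneq k1f => <-.
have := nc k2 k1 k2f k2g; rewrite k1y yg yf => /(_ isT isT).
by rewrite -k1y (cliqP _ cK).
Qed.

Lemma A_P : two_asummable (clique_hyp e) -> alt4free.
Proof.
move=> HA a b c d eab ecd ac bd; apply/negPn/negP; rewrite negb_or.
move=> /andP[nac nbd].
have [f [g [mf mg [af bf ag bg] [cg dg cf df]]]] := alt_setup eab ecd ac bd nac nbd.
have [x [y [xf xg yg yf [H1 H2]]]] : exists x y, [/\ x \in f, x \notin g, y \in g, y \notin f &
  (e x y \/ ((forall x' y', x' \in f -> x' \notin g -> y' \in g -> y' \notin f -> ~~ e x' y')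
              /\ exists2 y', y' \in g & (y' \notin f) && (y' != y))) /\
  (e y x \/ ((forall y' x', y' \in g -> y' \notin f -> x' \in f -> x' \notin g -> ~~ e y' x')
              /\ exists2 x', x' \in f & (x' \notin g) && (x' != x)))].
  case/boolP: [exists x', exists y', [&& x' \in f, x' \notin g, y' \in g, y' \notin f & e x' y']].
    case/existsP => x' /existsP[y' /and5P[x'f x'g y'g y'f exy]].
    by exists x', y'; split => //; split; [left | left; rewrite esym].
  move=> nc.
  have nc' : forall x' y', x' \in f -> x' \notin g -> y' \in g -> y' \notin f -> ~~ e x' y'.
    move=> x' y' x'f x'g y'g y'f; apply/negP => exy; move/negP: nc; apply.
    by apply/existsP; exists x'; apply/existsP; exists y'; rewrite x'f x'g y'g y'f exy.
  exists b, d; split => //; split.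
    right; split; first exact: nc'.
    by exists c; rewrite // cf (neq_of_e ecd).
  right; split.
    by move=> y' x' y'g y'f x'f x'g; rewrite esym; apply: nc'.
  by exists a; rewrite // ag (neq_of_e eab).
apply: HA; exists (y |: (f :\ x)), (x |: (g :\ y)), f, g; split.
- by apply/negP => /depT; apply: (indep_swap mf mg xf xg yg yf H1).
- by apply/negP => /depT; apply: (indep_swap mg mf yg yf xf xg H2).
- by apply/depT; exists f; split.
- by apply/depT; exists g; split.
move=> z; rewrite /chi !inE.
have xy : x != y by apply: contraNneq yf => <-.
have [->|zx] := eqVneq z x.
  by rewrite xf (negbTE xg) (negbTE xy).
have [->|zy] := eqVneq z y.
  by rewrite yg (negbTE yf).
by rewrite /=; case: (z \in f); case: (z \in g).
Qed.

Definition nbU (U : {set T}) x := [set y in U | e x y].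
Definition degU U x := #|nbU U x|.

Lemma upclose (HP : alt4free) (U : {set T}) x y z : x \in U -> y \in U -> z \in U ->
  e x y -> z != x -> degU U y <= degU U z -> e x z.
Proof.
move=> xU yU zU exy zx dyz; apply/negPn/negP => nxz.
have zy : z != y by apply: contraNneq nxz => ->.
have [u uA uB] : exists2 u, u \in nbU U z :\ y & u \notin nbU U y :\ z.
  apply/subsetPn/negP => sAB.
  have xB : x \in nbU U y :\ z by rewrite !inE eq_sym zx xU esym.
  have xA : x \notin nbU U z :\ y by rewrite !inE esym (negbTE nxz) !andbF.
  have pr : nbU U z :\ y \proper nbU U y :\ z by apply/properP; split => //; exists x.
  have := proper_card pr.
  move: dyz; rewrite /degU (cardsD1 y (nbU U z)) (cardsD1 z (nbU U y)) !inE yU zU esym.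
  case: (e z y) => /=; lia.
move: uA uB; rewrite !inE => /andP[uy /andP[uU ezu]].
rewrite uU /= negb_and negbK => /orP[/eqP uz|nyu].
  by move: ezu; rewrite uz eirr.
have := HP x y z u exy ezu; rewrite eq_sym zx eq_sym uy (negbTE nxz) (negbTE nyu).
by move=> /(_ isT isT).
Qed.

Definition domU v (U : {set T}) := forall u, u \in U -> u != v -> e v u.
Definition isoU v (U : {set T}) := forall u, u \in U -> ~~ e v u.

Lemma exists_vert (HP : alt4free) (U : {set T}) : U != set0 ->
  exists2 v, v \in U & (domU v U \/ (isoU v U /\ U :\ v != set0)).
Proof.
case/set0Pn => u0 u0U.
case: (arg_maxnP (degU U) u0U) => v vU vmax.
case/boolP: [forall u in U, (u != v) ==> e v u] => [/forallP H|].
  exists v => //; left => u uU uv; move: (H u); rewrite uU uv; exact.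
rewrite negb_forall_in => /existsP[y /andP[yU]]; rewrite negb_imply => /andP[yv nvy].
exists y => //; right; split.
  move=> u uU; apply/negP => eyu.
  have := upclose HP yU uU vU eyu; rewrite eq_sym yv => /(_ isT (vmax u uU)).
  by rewrite esym (negbTE nvy).
by apply/set0Pn; exists v; rewrite !inE eq_sym yv; exact: vU.
Qed.

Lemma U_ind (HP : alt4free) (Pr : {set T} -> Prop) : Pr set0 ->
  (forall (U : {set T}) v, v \in U -> (domU v U \/ (isoU v U /\ U :\ v != set0)) -> Pr (U :\ v) -> Pr U) ->
  forall U, Pr U.
Proof.
move=> H0 HS U; move: {2}#|U| (leqnn #|U|) => n; elim: n U => [|n IH] U hU.
  have -> // : U = set0.
  by apply/eqP; rewrite -cards_eq0; move: hU; case: #|U|.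
case: (eqVneq U set0) => [->|Un0] //.
have [v vU hv] := exists_vert HP Un0.
apply: (HS U v vU hv); apply: IH; move: hU; rewrite (cardsD1 v U) vU.
by move: #|U :\ v| => k /=; lia.
Qed.

Lemma clique_sub (A B : {set T}) : A \subset B -> is_clique e B -> is_clique e A.
Proof.
move=> AB cB; apply/cliqP => x y xA yA; apply: (cliqP _ cB); exact: (subsetP AB).
Qed.

Lemma clique1 v : is_clique e [set v].
Proof. by apply/cliqP => x y; rewrite !inE => /eqP-> /eqP->; rewrite eqxx. Qed.

Lemma clique_add (U A : {set T}) v : domU v U -> A \subset U -> is_clique e A ->
  is_clique e (v |: A).
Proof.
move=> dv AU cA; apply/cliqP => x y; rewrite !inE => /orP[/eqP->|xA] /orP[/eqP->|yA];
  rewrite ?eqxx // => xy.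
- by apply: dv; [apply: (subsetP AU) | rewrite eq_sym].
- by rewrite esym; apply: dv; [apply: (subsetP AU) |].
- exact: (cliqP _ cA).
Qed.

Lemma mc_nonempty (U K : {set T}) : mcU U K -> U != set0 -> K != set0.
Proof.
move=> [KU cK mx] /set0Pn[u uU]; apply/negP => /eqP K0.
have := mx [set u]; rewrite sub1set uU clique1 K0 sub0set => /(_ isT isT isT) /setP/(_ u).
by rewrite !inE eqxx.
Qed.

Lemma mc_restrict (U W K : {set T}) : mcU U K -> K \subset W -> W \subset U -> mcU W K.
Proof.
move=> [KU cK mx] KW WU; split => // K' K'W cK' KK'.
apply: mx => //; exact: subset_trans WU.
Qed.

Lemma mc_iso_v (U : {set T}) v : v \in U -> isoU v U -> mcU U [set v].
Proof.
move=> vU iv; split; [by rewrite sub1set | exact: clique1 |].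
move=> K' K'U cK' vK'; apply/eqP; rewrite eqEsubset; apply/andP; split => //.
apply/subsetP => k kK'; rewrite inE; apply/negPn/negP => kv.
move: (iv k (subsetP K'U k kK')); rewrite (cliqP _ cK') //.
  by rewrite -sub1set.
by rewrite eq_sym.
Qed.

Lemma mc_iso_fw (U K : {set T}) v : v \in U -> isoU v U -> U :\ v != set0 ->
  mcU (U :\ v) K -> mcU U K.
Proof.
move=> vU iv Un0 mK; have Kn0 := mc_nonempty mK Un0.
case: mK => [KU cK mx]; split => //; first exact: subset_trans KU (subsetDl _ _).
move=> K' K'U cK' KK'; apply: mx => //.
have [k kK] := set0Pn _ Kn0.
have kv : k != v by move: (subsetP KU k kK); rewrite !inE => /andP[].
have vK' : v \notin K'.
  apply/negP => vK'; move: (iv k (subsetP K'U k (subsetP KK' k kK))).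
  by rewrite (cliqP _ cK') // ?(subsetP KK') // eq_sym.
apply/subsetP => z zK'; rewrite !inE (subsetP K'U z zK') andbT.
by apply: contraNneq vK' => <-.
Qed.

Lemma mc_dom_fw (U K : {set T}) v : v \in U -> domU v U ->
  mcU (U :\ v) K -> mcU U (v |: K).
Proof.
move=> vU dv [KU cK mx].
have KU' : K \subset U by exact: subset_trans KU (subsetDl _ _).
split; [by rewrite subUset sub1set vU | exact: clique_add dv KU' cK |].
move=> K' K'U cK' sK'.
have vK' : v \in K' by apply: (subsetP sK'); rewrite !inE eqxx.
have vK : v \notin K by apply/negP => /(subsetP KU); rewrite !inE eqxx.
have := mx (K' :\ v); rewrite setSD // (clique_sub (subsetDl _ _) cK').
have -> : K \subset K' :\ v.
  apply/subsetP => z zK; rewrite !inE (subsetP sK') ?inE ?zK ?orbT // andbT.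
  by apply: contraNneq vK => <-.
by move=> /(_ isT isT isT) <-; rewrite setD1K.
Qed.

Lemma mc_dom_bw (U K : {set T}) v : v \in U -> domU v U ->
  mcU U K -> v \in K /\ mcU (U :\ v) (K :\ v).
Proof.
move=> vU dv [KU cK mx].
have vK : v \in K.
  have := mx (v |: K); rewrite subUset sub1set vU KU (clique_add dv KU cK) subsetUr.
  by move=> /(_ isT isT isT) <-; rewrite !inE eqxx.
split => //; split; [exact: setSD | exact: clique_sub (subsetDl _ _) cK |].
move=> K' K'U cK' sK'.
have K'U' : K' \subset U by exact: subset_trans K'U (subsetDl _ _).
have vK' : v \notin K' by apply/negP => /(subsetP K'U); rewrite !inE eqxx.
have := mx (v |: K'); rewrite subUset sub1set vU K'U' (clique_add dv K'U' cK').
have -> : K \subset v |: K'.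
  by rewrite -{1}(setD1K vK); apply: setUS.
by move=> /(_ isT isT isT) <-; rewrite setU1K.
Qed.

Lemma sum_skip (w : T -> nat) (X : {set T}) v :
  \sum_(x in X) (if x == v then 0 else w x) = \sum_(x in X :\ v) w x.
Proof.
rewrite big_mkcond [RHS]big_mkcond; apply: eq_bigr => x _; rewrite !inE.
by case: eqVneq; case: (x \in X).
Qed.

Lemma sum_notin (F G : T -> nat) (X : {set T}) v : v \notin X ->
  (forall x, x != v -> F x = G x) -> \sum_(x in X) F x = \sum_(x in X) G x.
Proof.
move=> vX H; apply: eq_bigr => x xX; apply: H; by apply: contraNneq vX => <-.
Qed.

Lemma notin_sub (U X : {set T}) v : X \subset U -> v \notin X -> X \subset U :\ v.
Proof.
move=> XU vX; apply/subsetP => z zX; rewrite !inE (subsetP XU z zX) andbT.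
by apply: contraNneq vX => <-.
Qed.

Lemma subD1 (U X : {set T}) v : X \subset U -> X :\ v \subset U :\ v.
Proof. exact: setSD. Qed.

Lemma hasE0 : hasE set0 = false.
Proof. by apply/negbTE/existsP => [[x]]; rewrite inE. Qed.

Lemma hasE_iso (U X : {set T}) v : isoU v U -> X \subset U -> hasE X = hasE (X :\ v).
Proof.
move=> iv XU; apply/existsP/existsP.
  move=> [x /andP[xX /existsP[y /andP[yX exy]]]]; exists x.
  have xv : x != v.
    by apply: contraTneq exy => ->; apply: iv; exact: (subsetP XU).
  have yv : y != v.
    by apply: contraTneq exy => ->; rewrite esym; apply: iv; exact: (subsetP XU).
  rewrite !inE xv xX /=; apply/existsP; exists y; by rewrite !inE yv yX exy.
move=> [x /andP[]]; rewrite !inE => /andP[_ xX] /existsP[y /andP[]].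
rewrite !inE => /andP[_ yX] exy.
exists x; rewrite xX; apply/existsP; exists y; by rewrite yX.
Qed.

Lemma hasE_dom (U X : {set T}) v : domU v U -> v \in X -> X \subset U ->
  hasE X = (X :\ v != set0).
Proof.
move=> dv vX XU; apply/existsP/set0Pn.
  move=> [x /andP[xX /existsP[y /andP[yX exy]]]].
  have [xv|xv] := eqVneq x v.
    exists y; rewrite !inE yX andbT; rewrite -xv eq_sym; exact: (neq_of_e exy). 
  by exists x; rewrite !inE xv.
move=> [u]; rewrite !inE => /andP[uv uX]; exists v; rewrite vX /=.
apply/existsP; exists u; rewrite uX; apply: dv => //; exact: (subsetP XU).
Qed.

Lemma scale_le m t S k : k < m -> (m * t <= m * S + k) = (t <= S).
Proof.
move=> km; apply/idP/idP => h.
  rewrite leqNgt; apply/negP => lt.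
  have : m * S.+1 <= m * t := leq_mul (leqnn m) lt.
  rewrite mulnS; move: (m * S) (m * t) h => a b h; lia.
have := leq_mul (leqnn m) h; move: (m * S) (m * t) => a b; lia.
Qed.

Lemma sum_aff (w : T -> nat) (A : {set T}) m :
  \sum_(x in A) (m * w x + 1) = m * \sum_(x in A) w x + #|A|.
Proof. by rewrite big_split /= sum1_card big_distrr. Qed.

Definition PTU (U : {set T}) := exists (w : T -> nat) (t : nat),
  forall X : {set T}, X \subset U -> (t <= \sum_(x in X) w x) = hasE X.

Lemma P_PTU (HP : alt4free) (U : {set T}) : PTU U.
Proof.
elim/(U_ind HP) : U => [|U v vU hv [w [t Ht]]].
  exists (fun _ => 0), 1 => X; rewrite subset0 => /eqP->; by rewrite big_set0 hasE0.
have t0 : 0 < t by move: (Ht set0 (sub0set _)); rewrite big_set0 hasE0 leqn0 lt0n => ->.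
case: hv => [dv | [iv Un0]].
  pose m := #|U|.+1.
  exists (fun x => if x == v then m * t - 1 else m * w x + 1), (m * t) => X XU.
  have cX : forall Y : {set T}, Y \subset U -> #|Y| < m.
    by move=> Y YU; rewrite ltnS; apply: subset_leq_card.
  case/boolP: (v \in X) => vX.
    rewrite (big_setD1 _ vX) eqxx /= (hasE_dom dv vX XU).
    rewrite (@sum_notin _ (fun x => m * w x + 1) (X :\ v) v); first last.
    - by move=> x xv; rewrite (negbTE xv).
    - by rewrite !inE eqxx.
    rewrite sum_aff.
    have mt : 0 < m * t by rewrite muln_gt0.
    case: (eqVneq (X :\ v) set0) => [->|Xn0].
      by rewrite big_set0 cards0 /=; move: (m * t) mt => a; lia.
    have := Xn0; rewrite -card_gt0 => k0 /=.
    by move: (m * t) (m * _) #|X :\ v| mt k0 => a b c; lia.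
  rewrite (@sum_notin _ (fun x => m * w x + 1) X v) //; last first.
    by move=> x xv; rewrite (negbTE xv).
  by rewrite sum_aff scale_le ?cX // Ht // notin_sub.
exists (fun x => if x == v then 0 else w x), t => X XU.
by rewrite sum_skip Ht ?subD1 // -(hasE_iso iv XU).
Qed.

Lemma sum_sub (w : T -> nat) (X Y : {set T}) : X \subset Y ->
  \sum_(x in X) w x <= \sum_(x in Y) w x.
Proof.
move=> XY; rewrite [X in _ <= X](big_setID X) /= (setIidPr XY); exact: leq_addr.
Qed.

Lemma mc0 : mcU set0 set0.
Proof.
split; [exact: subxx | by apply/cliqP => x y; rewrite inE |].
by move=> K'; rewrite subset0 => /eqP.
Qed.

Definition PHU (U : {set T}) := exists (w : T -> nat) (t : nat),
  forall X : {set T}, X \subset U -> (t <= \sum_(x in X) w x) <-> depU U X.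

Lemma P_PHU (HP : alt4free) (U : {set T}) : PHU U.
Proof.
elim/(U_ind HP) : U => [|U v vU hv [w [t Ht]]].
  exists (fun _ => 0), 0 => X _; split => // _; exists set0; split; [exact: mc0 | exact: sub0set].
case: hv => [dv | [iv Un0]].
  pose M := (\sum_(x in U :\ v) w x).+1.
  exists (fun x => if x == v then M else w x), (t + M) => X XU.
  case/boolP: (v \in X) => vX.
    rewrite (big_setD1 _ vX) eqxx /=.
    rewrite (@sum_notin _ w (X :\ v) v); first last.
    - by move=> x xv; rewrite (negbTE xv).
    - by rewrite !inE eqxx.
    rewrite addnC leq_add2l Ht ?subD1 //; split.
      move=> [K0 [mK0 K0X]]; exists (v |: K0); split; first exact: mc_dom_fw.
      rewrite subUset sub1set vX /=; apply: subset_trans K0X _; exact: subsetDl.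
    move=> [K [mK KX]]; have [vK mK'] := mc_dom_bw vU dv mK.
    by exists (K :\ v); split => //; apply: setSD.
  rewrite (@sum_notin _ w X v) //; last first.
    by move=> x xv; rewrite (negbTE xv).
  split.
    have : \sum_(x in X) w x <= \sum_(x in U :\ v) w x by apply: sum_sub; exact: notin_sub.
    rewrite /M; move: (\sum_(x in X) w x) (\sum_(x in U :\ v) w x) => a b; lia.
  move=> [K [mK KX]]; have [vK _] := mc_dom_bw vU dv mK.
  by move: vX; rewrite (subsetP KX v vK).
exists (fun x => if x == v then t else w x), t => X XU.
case/boolP: (v \in X) => vX.
  rewrite (big_setD1 _ vX) eqxx /=; split => [_|_]; last exact: leq_addr.
  by exists [set v]; split; [exact: mc_iso_v | rewrite sub1set].
rewrite (@sum_notin _ w X v) //; last first.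
  by move=> x xv; rewrite (negbTE xv).
have XU' := notin_sub XU vX.
rewrite Ht //; split.
  by move=> [K [mK KX]]; exists K; split => //; exact: mc_iso_fw mK.
move=> [K [mK KX]]; exists K; split => //.
exact: (mc_restrict mK (subset_trans KX XU') (subsetDl _ _)).
Qed.

Definition PSU (U : {set T}) := forall f g : {set T}, mcU U f -> mcU U g -> f != g ->
  minn #|f :\: g| #|g :\: f| = 1.

Lemma iso_single (U f : {set T}) v : v \in U -> isoU v U -> mcU U f -> v \in f -> f = [set v].
Proof.
move=> vU iv [fU cf _] vf; have [_ _ mx] := mc_iso_v vU iv.
by apply: mx => //; rewrite sub1set.
Qed.

Lemma PS_case (U f g : {set T}) v : v \in U -> isoU v U -> U :\ v != set0 ->
  mcU U f -> mcU U g -> v \in f -> v \notin g -> minn #|f :\: g| #|g :\: f| = 1.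
Proof.
move=> vU iv Un0 mf mg vf vg.
have fv := iso_single vU iv mf vf.
have gU : g \subset U by case: mg.
have mg' : mcU (U :\ v) g := mc_restrict mg (notin_sub gU vg) (subsetDl _ _).
have [u ug] := set0Pn _ (mc_nonempty mg' Un0).
have h1 : #|f :\: g| = 1.
  suff -> : f :\: g = [set v] by rewrite cards1.
  apply/setP => z; rewrite fv !inE; case: eqVneq => [->|] /=; by rewrite ?vg ?andbF.
have h2 : 0 < #|g :\: f|.
  rewrite card_gt0; apply/set0Pn; exists u; rewrite fv !inE ug andbT.
  by apply: contraNneq vg => <-.
rewrite h1; move: #|g :\: f| h2 => k; lia.
Qed.

Lemma P_PSU (HP : alt4free) (U : {set T}) : PSU U.
Proof.
elim/(U_ind HP) : U => [|U v vU hv IH].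
  move=> f g [f0 _ _] [g0 _ _]; move: f0 g0; rewrite !subset0 => /eqP-> /eqP->.
  by rewrite eqxx.
case: hv => [dv | [iv Un0]] f g mf mg fg.
  have [vf mf'] := mc_dom_bw vU dv mf.
  have [vg mg'] := mc_dom_bw vU dv mg.
  have fg' : f :\ v != g :\ v.
    by apply: contraNneq fg => H; rewrite -(setD1K vf) -(setD1K vg) H.
  have E : forall A B : {set T}, v \in A -> v \in B -> A :\: B = (A :\ v) :\: (B :\ v).
    move=> A B vA vB; apply/setP => z; rewrite !inE.
    by case: eqVneq => [->|] /=; rewrite ?vB.
  rewrite (E f g vf vg) (E g f vg vf); exact: IH.
case/boolP: (v \in f) => vf; case/boolP: (v \in g) => vg.
- by move: fg; rewrite (iso_single vU iv mf vf) (iso_single vU iv mg vg) eqxx.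
- exact: (PS_case vU iv Un0 mf mg).
- rewrite minnC; exact: (PS_case vU iv Un0 mg mf).
have gU : g \subset U by case: mg.
have fU : f \subset U by case: mf.
apply: IH => //.
  exact: (mc_restrict mf (notin_sub fU vf) (subsetDl _ _)).
exact: (mc_restrict mg (notin_sub gU vg) (subsetDl _ _)).
Qed.

Lemma all_equiv :
  [/\ (threshold_graph e <-> one_Sperner (clique_hyp e)),
      (threshold_graph e <-> threshold_hyp (clique_hyp e)) &
      (threshold_graph e <-> two_asummable (clique_hyp e))].
Proof.
have PT : alt4free -> threshold_graph e.
  move=> HP; have [w [t H]] := P_PTU HP setT.
  by exists w, t => X; rewrite depE; apply: H; exact: subsetT.
have PH : alt4free -> threshold_hyp (clique_hyp e).
  move=> HP; have [w [t H]] := P_PHU HP setT.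
  exists w, t => X; apply/idP/idP.
    by move/(H X (subsetT _)) => /depT.
  by move/depT/(H X (subsetT _)).
have PS : alt4free -> one_Sperner (clique_hyp e).
  move=> HP f g /mcT mf /mcT mg fg; exact: (P_PSU HP mf mg fg).
have HA := @thr_asum (clique_hyp e).
split; split => H.
- exact: PS (T_P H).
- exact: PT (S_P H).
- exact: PH (T_P H).
- exact: PT (A_P (HA H)).
- exact: HA (PH (T_P H)).
- exact: PT (A_P H).
Qed.
End Main.

Theorem theorem20 (T : finType) (e : rel T) :
  simple_graph e ->
  [/\ (threshold_graph e <-> one_Sperner (clique_hyp e)),
      (threshold_graph e <-> threshold_hyp (clique_hyp e)) &
      (threshold_graph e <-> two_asummable (clique_hyp e))].
Proof. by move=> [s i]; apply: all_equiv. Qed.
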